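(* Let $\mathcal{L}$ be a set of graphs of sort $\emptyset$, let $\tau\subseteq\mathbb{S}$ be finite and let $G_1,G_2$ be graphs of sort included in $\tau$. Then $G_1\cong^{\mathbf{G}}_{\mathcal{L}}G_2$ iff $G_1\cong^{\mathbf{G}^\tau}_{\mathcal{L}}G_2$.
   Context: Graphs over a countably infinite set $\mathbb{S}$ of source labels and a set $\mathbb{A}$ of edge labels: isomorphism classes of finite $\mathbb{A}$-labelled hypergraphs with an injective map from a finite sort into the vertices (sources). The HR algebra $\mathbf{G}$: sorts the finite subsets of $\mathbb{S}$; operations $\mathbf{0}_\sigma$, $\mathbf{a}_{(s_1,\ldots)}$, $\mathsf{restrict}_\sigma$ (forget source labels outside $\sigma$, keep vertices), $\mathsf{rename}_\alpha$ ($\alpha$ finite permutation of $\mathbb{S}$, relabelling sources), $\parallel$ (disjoint union fusing equally-labelled sources). $\mathbf{G}^\tau$: subalgebra with sorts the subsets of $\tau$, universe the graphs of sort $\subseteq\tau$, and operations $\mathbf{0}_\sigma$ ($\sigma\subseteq\tau$), $\mathbf{a}_{(s_1,\ldots)}$ ($s_i\in\tau$), $\mathsf{restrict}_\sigma$ ($\sigma\subseteq\tau$), $\mathsf{rename}_\alpha$ ($\alpha$ fixing all elements outside $\tau$), $\parallel$. The syntactic congruence $\cong^{\mathbf{A}}_{\mathcal{L}}$ in an algebra $\mathbf{A}$ relates elements $a,b$ of $\mathbf{A}$ iff they have the same sort and for every first-order term $t(x,y_1,\ldots,y_k)$ over the signature of $\mathbf{A}$ and all elements $c_i$ of $\mathbf{A}$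 of matching sorts, $t^{\mathbf{A}}(a,\bar c)\in\mathcal{L}\iff t^{\mathbf{A}}(b,\bar c)\in\mathcal{L}$. *)

(* Defs.v *)
From mathcomp Require Import all_boot.
From mathcomp Require Import finmap.
From Stdlib Require Import Permutation.

Set Implicit Arguments.
Unset Strict Implicit.
Unset Printing Implicit Defensive.



(* Source labels: S = nat (countably infinite).
   A concrete graph: a duplicate-free list of vertex names (nats), a list
   (multiset) of hyperedges, each an A-label with a list of attached
   vertices, and a list of (source label, vertex) pairs. *)
Section Graphs.
Variable A : Type.

Record graph := Graph {
  verts : seq nat;
  edges : seq (A * seq nat);
  src   : seq (nat * nat)
}.

(* well-formedness: the concrete data really is a finite hypergraph with an
   injective source map from a finite set of labels into the vertices *)
Definition wf_graph (G : graph) : Prop :=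
  [/\ uniq (verts G),
      all (fun e => all (fun v => v \in verts G) e.2) (edges G),
      all (fun p => p.2 \in verts G) (src G),
      uniq (map fst (src G)) &
      uniq (map snd (src G))].

Definition gsort (G : graph) : {fset nat} := [fset x | x in map fst (src G)]%fset.

Definition iso (G H : graph) : Prop :=
  exists f : nat -> nat,
    [/\ Permutation (map f (verts G)) (verts H),
        Permutation (map (fun e => (e.1, map f e.2)) (edges G)) (edges H) &
        Permutation (map (fun p => (p.1, f p.2)) (src G)) (src H)].

Definition g_zero (sigma : {fset nat}) : graph :=
  Graph (enum_fset sigma) [::] [seq (s, s) | s <- enum_fset sigma].

Definition g_edge (a : A) (s : seq nat) : graph :=
  Graph (undup s) [:: (a, s)] [seq (x, x) | x <- undup s].

Definition g_restrict (sigma : {fset nat}) (G : graph) : graph :=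
  Graph (verts G) (edges G) [seq p <- src G | p.1 \in sigma].

Definition g_rename (alpha : nat -> nat) (G : graph) : graph :=
  Graph (verts G) (edges G) [seq (alpha p.1, p.2) | p <- src G].

(* parallel composition: disjoint union fusing equally labelled sources *)
Definition src_vertex (G : graph) (s : nat) : option nat :=
  ohead [seq p.2 | p <- src G & p.1 == s].
Definition src_label (G : graph) (v : nat) : option nat :=
  ohead [seq p.1 | p <- src G & p.2 == v].

Definition g_par (G H : graph) : graph :=
  let off := (foldr maxn 0 (verts G)).+1 in
  let fuse v := obind (src_vertex G) (src_label H v) in
  let mv v := odflt (v + off) (fuse v) in
  Graph (verts G ++ [seq v + off | v <- verts H & ~~ isSome (fuse v)])
        (edges G ++ [seq (e.1, map mv e.2) | e <- edges H])
        (src G ++ [seq (p.1, mv p.2) | p <- src H & p.1 \notin gsort G]).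

Inductive term :=
  | TX
  | TY of nat
  | TZero of {fset nat}
  | TEdge of A & seq nat
  | TRestrict of {fset nat} & term
  | TRename of (nat -> nat) & term
  | TPar of term & term.

Fixpoint eval (x : graph) (y : nat -> graph) (t : term) : graph :=
  match t with
  | TX => x
  | TY i => y i
  | TZero sigma => g_zero sigma
  | TEdge a s => g_edge a s
  | TRestrict sigma t => g_restrict sigma (eval x y t)
  | TRename alpha t => g_rename alpha (eval x y t)
  | TPar t1 t2 => g_par (eval x y t1) (eval x y t2)
  end.

Definition finite_perm (alpha : nat -> nat) : Prop :=
  bijective alpha /\ exists N, forall n, N <= n -> alpha n = n.

Fixpoint term_G (t : term) : Prop :=
  match t with
  | TX | TY _ | TZero _ | TEdge _ _ => True
  | TRestrict _ t => term_G t
  | TRename alpha t => finite_perm alpha /\ term_G t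
  | TPar t1 t2 => term_G t1 /\ term_G t2
  end.

Fixpoint term_Gtau (tau : {fset nat}) (t : term) : Prop :=
  match t with
  | TX | TY _ => True
  | TZero sigma => (sigma `<=` tau)%fset
  | TEdge _ s => all (fun x => x \in tau) s
  | TRestrict sigma t => (sigma `<=` tau)%fset /\ term_Gtau tau t
  | TRename alpha t =>
      (finite_perm alpha /\ forall n, n \notin tau -> alpha n = n)
      /\ term_Gtau tau t
  | TPar t1 t2 => term_Gtau tau t1 /\ term_Gtau tau t2
  end.

Definition elem_G (G : graph) : Prop := wf_graph G.
Definition elem_Gtau (tau : {fset nat}) (G : graph) : Prop :=
  wf_graph G /\ (gsort G `<=` tau)%fset.

(* syntactic congruence of L in the algebra given by its admissible terms
   (Tm) and its universe (El) *)
Definition syn_cong (Tm : term -> Prop) (El : graph -> Prop)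
  (L : graph -> Prop) (a b : graph) : Prop :=
  gsort a = gsort b /\
  forall t, Tm t -> forall y : nat -> graph, (forall i, El (y i)) ->
    (L (eval a y t) <-> L (eval b y t)).

End Graphs.

(* Main.v *)
Set Warnings "-notation-overridden,-notation-incompatible-prefix".
Require Import Defs.
From mathcomp Require Import all_boot.
From mathcomp Require Import finmap zify.
From Stdlib Require Import Permutation.

Set Implicit Arguments.
Unset Strict Implicit.
Unset Printing Implicit Defensive.

Section Basics.

Lemma perm_eq_Perm (T : eqType) (s1 s2 : seq T) : perm_eq s1 s2 -> Permutation s1 s2.
Proof.
elim: s1 s2 => [|x s1 IH] s2 p.
  by move: p; rewrite perm_sym => /perm_nilP ->.
have xin : x \in s2 by rewrite -(perm_mem p) mem_head.
case/splitPr: xin p => s2a s2b p.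
apply: (@Permutation_trans _ _ (x :: s2a ++ s2b)); last exact: Permutation_middle.
constructor; apply: IH.
rewrite -(perm_cons x); apply: (seq.perm_trans p).
by rewrite perm_sym -cat1s -[s2a ++ x :: s2b]/(s2a ++ [:: x] ++ s2b) perm_catCA.
Qed.

Lemma Perm_perm_eq (T : eqType) (s1 s2 : seq T) : Permutation s1 s2 -> perm_eq s1 s2.
Proof.
elim => //=.
- by move=> x l l' _ p; rewrite perm_cons.
- by move=> x y l; apply/permP => P /=; rewrite addnCA.
- by move=> l l' l'' _ p1 _ p2; apply: seq.perm_trans p1 p2.
Qed.

Lemma Perm_mem (T : eqType) (s1 s2 : seq T) x : Permutation s1 s2 -> (x \in s1) = (x \in s2).
Proof. by move/Perm_perm_eq/perm_mem. Qed.

Definition lk1 (s : seq (nat * nat)) l := ohead [seq p.2 | p <- s & p.1 == l].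
Definition lk2 (s : seq (nat * nat)) v := ohead [seq p.1 | p <- s & p.2 == v].

Lemma lk1_mem s l v : lk1 s l = Some v -> (l, v) \in s.
Proof.
elim: s => //= [[a b] s IH] /=; rewrite /lk1 /=.
case: eqP => [-> [->]|_ /IH]; first by rewrite mem_head.
by rewrite in_cons => ->; rewrite orbT.
Qed.

Lemma lk1_in s l v : uniq (map fst s) -> (l, v) \in s -> lk1 s l = Some v.
Proof.
elim: s => //= [[a b] s IH] /= /andP[an un]; rewrite in_cons /lk1 /=.
case/orP => [/eqP [-> ->]|h]; first by rewrite eqxx.
case: eqP => [ea|_]; last by apply: IH.
by move: an; rewrite ea; move/negP; case; apply/mapP; exists (l, v).
Qed.

Lemma lk1_none s l : l \notin map fst s -> lk1 s l = None.
Proof.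
elim: s => //= [[a b] s IH] /=; rewrite in_cons negb_or /lk1 /= => /andP[na nb].
by rewrite eq_sym (negbTE na); apply: IH.
Qed.

Lemma lk1_some s l : l \in map fst s -> exists v, lk1 s l = Some v.
Proof.
elim: s => //= [[a b] s IH] h; rewrite /lk1 /=.
case: (a =P l) => [->|ne] /=; first by exists b.
apply: IH; move: h; rewrite in_cons; case/orP => // /eqP e; by case: ne.
Qed.

Lemma lk2_some s v : v \in map snd s -> exists l, lk2 s v = Some l.
Proof.
elim: s => //= [[a b] s IH] h; rewrite /lk2 /=.
case: (b =P v) => [->|ne] /=; first by exists a.
apply: IH; move: h; rewrite in_cons; case/orP => // /eqP e; by case: ne.
Qed.

Lemma lk2_mem s l v : lk2 s v = Some l -> (l, v) \in s.
Proof.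
elim: s => //= [[a b] s IH] /=; rewrite /lk2 /=.
case: eqP => [-> [->]|_ /IH]; first by rewrite mem_head.
by rewrite in_cons => ->; rewrite orbT.
Qed.

Lemma lk2_in s l v : uniq (map snd s) -> (l, v) \in s -> lk2 s v = Some l.
Proof.
elim: s => //= [[a b] s IH] /= /andP[an un]; rewrite in_cons /lk2 /=.
case/orP => [/eqP [-> ->]|h]; first by rewrite eqxx.
case: eqP => [ea|_]; last by apply: IH.
by move: an; rewrite ea; move/negP; case; apply/mapP; exists (l, v).
Qed.

Lemma lk2_none s v : v \notin map snd s -> lk2 s v = None.
Proof.
elim: s => //= [[a b] s IH] /=; rewrite in_cons negb_or /lk2 /= => /andP[na nb].
by rewrite eq_sym (negbTE na); apply: IH.
Qed.

End Basics.

Section Graphs2.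
Variable A : Type.
Notation graph := (graph A).
Implicit Types G H K C D Z W : graph.

Definition lab G := map fst (src G).
Definition svs G := map snd (src G).
Definition off G := (foldr maxn 0 (verts G)).+1.
Definition fuse G H v := obind (lk1 (src G)) (lk2 (src H) v).
Definition mv G H v := odflt (v + off G) (fuse G H v).

Lemma in_gsort G l : (l \in gsort G) = (l \in lab G).
Proof. by rewrite inE. Qed.

Lemma lt_off G v : v \in verts G -> v < off G.
Proof.
rewrite /off ltnS; elim: (verts G) => //= a s IH; rewrite in_cons.
by case/orP => [/eqP ->|/IH h]; rewrite leq_max ?leqnn // h orbT.
Qed.

Lemma par_verts G H : verts (g_par G H) = verts G ++ [seq v + off G | v <- verts H & ~~ fuse G H v].
Proof. by []. Qed.
Lemma par_edges G H : edges (g_par G H) = edges G ++ [seq (e.1, map (mv G H) e.2) | e <- edges H].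
Proof. by []. Qed.
Lemma par_src0 G H : src (g_par G H) = src G ++ [seq (p.1, mv G H p.2) | p <- src H & p.1 \notin gsort G].
Proof. by []. Qed.

Lemma wf_src_vert G l v : wf_graph G -> (l, v) \in src G -> v \in verts G.
Proof. by case=> _ _ /allP h _ _ /h. Qed.

Lemma wf_edges G : wf_graph G -> all (fun e => all (fun v => v \in verts G) e.2) (edges G).
Proof. by case. Qed.

Lemma eq_map_all (T U : Type) (P : pred T) (f g : T -> U) s :
  all P s -> (forall x, P x -> f x = g x) -> map f s = map g s.
Proof. elim: s => //= a s IH /andP[pa ps] h; by rewrite h // IH. Qed.

Lemma all_map_in (T U : Type) (P : pred T) (Q : pred U) (f : T -> U) s :
  all P s -> (forall x, P x -> Q (f x)) -> all Q (map f s).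
Proof. elim: s => //= a s IH /andP[pa ps] h; by rewrite h // IH. Qed.

Lemma fuse_src G H l v : wf_graph H -> (l, v) \in src H -> fuse G H v = lk1 (src G) l.
Proof. by case=> _ _ _ _ uS h; rewrite /fuse (lk2_in uS h). Qed.

Lemma fuse_nsrc G H v : v \notin svs H -> fuse G H v = None.
Proof. by move=> h; rewrite /fuse lk2_none. Qed.

Lemma fuse_some G H v w : fuse G H v = Some w ->
  exists l, (l, v) \in src H /\ (l, w) \in src G.
Proof.
rewrite /fuse; case e: (lk2 (src H) v) => [l|] //= h.
by exists l; split; [apply: lk2_mem|apply: lk1_mem].
Qed.

Lemma lk1_lab_none s l : lk1 s l = None -> l \notin map fst s.
Proof. by move=> h; apply/negP => /lk1_some [v]; rewrite h. Qed.

Lemma par_src G H : wf_graph H ->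
  src (g_par G H) = src G ++ [seq (p.1, p.2 + off G) | p <- src H & p.1 \notin gsort G].
Proof.
move=> wH; rewrite par_src0; congr (_ ++ _); apply/eq_in_map => -[l v].
rewrite mem_filter /= => /andP[nl lv]; rewrite /mv (fuse_src _ wH lv) lk1_none //.
by rewrite -in_gsort.
Qed.

Lemma lab_par G H : lab (g_par G H) = lab G ++ [seq p.1 | p <- src H & p.1 \notin gsort G].
Proof. by rewrite /lab par_src0 map_cat -map_comp. Qed.

Lemma mem_lab_par G H l : (l \in lab (g_par G H)) = (l \in lab G) || (l \in lab H).
Proof.
rewrite lab_par mem_cat; case: (boolP (l \in lab G)) => //= nl.
rewrite /lab; apply/mapP/mapP => [[p + ->]|[p pH el]]; first by rewrite mem_filter => /andP[_ pH]; exists p.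
by exists p => //; rewrite mem_filter pH andbT in_gsort -el.
Qed.

Lemma fuse_vert G H v w : wf_graph G -> fuse G H v = Some w -> w \in verts G.
Proof. by move=> wG /fuse_some [l [_ h]]; apply: wf_src_vert h. Qed.

Lemma mv_in G H v : wf_graph G -> v \in verts H -> mv G H v \in verts (g_par G H).
Proof.
move=> wG vH; rewrite /mv par_verts mem_cat; case e: (fuse G H v) => [w|] /=.
  by rewrite (fuse_vert wG e).
apply/orP; right; apply/mapP; exists v => //; by rewrite mem_filter e.
Qed.

Lemma mv_lt G H v : wf_graph G -> v \in verts H -> mv G H v < off G + off H.
Proof.
move=> wG vH; rewrite /mv; case e: (fuse G H v) => [w|] /=.
  by apply: leq_trans (lt_off (fuse_vert wG e)) _; rewrite leq_addr.
by rewrite addnC ltn_add2l lt_off.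
Qed.

End Graphs2.

Section WF.
Variable A : Type.
Notation graph := (graph A).
Implicit Types G H K C D Z W : graph.

Lemma map_fst_diag (s : seq nat) : [seq p.1 | p <- [seq (x, x) | x <- s]] = s.
Proof. by elim: s => //= a s ->. Qed.
Lemma map_snd_diag (s : seq nat) : [seq p.2 | p <- [seq (x, x) | x <- s]] = s.
Proof. by elim: s => //= a s ->. Qed.

Lemma uniq_map_filter (T U : eqType) (f : T -> U) (P : pred T) s :
  uniq (map f s) -> uniq (map f (filter P s)).
Proof. by apply: subseq_uniq; apply: map_subseq; apply: filter_subseq. Qed.

Lemma wf_par G H : wf_graph G -> wf_graph H -> wf_graph (g_par G H).
Proof.
move=> wG wH; have [uV eE sE uL uS] := wG; have [uV' eE' sE' uL' uS'] := wH.
split.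
- rewrite par_verts cat_uniq uV /=; apply/andP; split.
    apply/hasPn => w /mapP [v _ ->]; apply/negP => /lt_off; by rewrite ltnNge leq_addl.
  by rewrite map_inj_uniq ?filter_uniq //; apply: addIn.
- rewrite par_edges all_cat; apply/andP; split.
    apply: sub_all eE => e /=; apply: sub_all => v vG; by rewrite ?par_verts mem_cat vG.
  rewrite all_map; apply: sub_all eE' => e /= he; rewrite all_map.
  apply: sub_all he => v /= vH; exact: mv_in.
- rewrite (par_src _ wH) all_cat; apply/andP; split.
    apply: sub_all sE => p /= pG; by rewrite ?par_verts mem_cat pG.
  rewrite all_map; apply/allP => -[l v]; rewrite mem_filter /= => /andP[nl lv].
  rewrite ?par_verts mem_cat; apply/orP; right; apply/mapP; exists v => //.
  rewrite mem_filter (wf_src_vert wH lv) andbT -/(fuse G H v) (fuse_src _ wH lv) lk1_none //.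
  by rewrite -in_gsort.
- rewrite -/(lab _) lab_par cat_uniq; apply/and3P; split => //.
    apply/hasPn => l /mapP [p]; rewrite mem_filter => /andP[np _] ->.
    by rewrite -in_gsort.
  by apply: uniq_map_filter.
- rewrite (par_src _ wH) map_cat cat_uniq uS /=; apply/andP; split.
    apply/hasPn => w /mapP [p /mapP [r _ ->] ->] /=; apply/negP => /mapP [q qG e].
    have qG' : (q.1, q.2) \in src G by rewrite -surjective_pairing.
    have := lt_off (wf_src_vert wG qG').
    by rewrite -e /= ltnNge leq_addl.
  rewrite -map_comp (map_comp (addn^~ (off G)) snd) map_inj_uniq; last by apply: addIn.
  by apply: uniq_map_filter.
Qed.

Lemma wf_restrict G s : wf_graph G -> wf_graph (g_restrict s G).
Proof.
case=> uV eE sE uL uS; split => //=.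
- by rewrite all_filter; apply/allP => p pG; apply/implyP => _; apply: (allP sE).
- by apply: uniq_map_filter.
- by apply: uniq_map_filter.
Qed.

Lemma wf_rename G (al : nat -> nat) : injective al -> wf_graph G -> wf_graph (g_rename al G).
Proof.
move=> ia [uV eE sE uL uS]; split => //=.
- by rewrite all_map.
- by rewrite -map_comp (map_comp al fst) map_inj_uniq.
- by rewrite -map_comp.
Qed.

Lemma wf_zero s : wf_graph (g_zero A s).
Proof.
split => //=; rewrite ?map_fst_diag ?map_snd_diag ?fset_uniq //.
by rewrite all_map; apply/allP.
Qed.

Lemma wf_edge (a : A) s : wf_graph (g_edge a s).
Proof.
split => //=; rewrite ?map_fst_diag ?map_snd_diag ?undup_uniq //.
- by rewrite andbT; apply/allP => v; rewrite mem_undup.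
- by rewrite all_map; apply/allP.
Qed.

Lemma bij_inj' (f : nat -> nat) : bijective f -> injective f.
Proof. by case=> g h1 h2; apply: can_inj h1. Qed.

Lemma wf_eval (x : graph) y t : term_G t -> wf_graph x -> (forall i, wf_graph (y i)) ->
  wf_graph (eval x y t).
Proof.
move=> + wx wy; elim: t => //=.
- by move=> *; apply: wf_zero.
- by move=> *; apply: wf_edge.
- by move=> s t IH h; apply: wf_restrict; apply: IH.
- by move=> al t IH [[b _] h]; apply: wf_rename; [apply: bij_inj'|apply: IH].
- by move=> t1 IH1 t2 IH2 [h1 h2]; apply: wf_par; [apply: IH1|apply: IH2].
Qed.

End WF.

Section Iso.
Variable A : Type.
Notation graph := (graph A).
Implicit Types G H K C D Z W : graph.

Definition Fe (f : nat -> nat) (e : A * seq nat) := (e.1, map f e.2).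
Definition Fs (f : nat -> nat) (p : nat * nat) := (p.1, f p.2).

Lemma Perm_map (T U : Type) (f : T -> U) s1 s2 : Permutation s1 s2 -> Permutation (map f s1) (map f s2).
Proof.
have E : forall s, List.map f s = map f s by elim => //= a s ->.
by move=> p; rewrite -!E; apply: Permutation_map.
Qed.

Lemma uniq_map_inj_in (T U : eqType) (f : T -> U) s : uniq (map f s) -> {in s &, injective f}.
Proof.
elim: s => //= a s IH /andP[na us] x y; rewrite !in_cons.
case/orP => [/eqP->|xs]; case/orP => [/eqP->|ys] e //.
- by move: na; rewrite e map_f.
- by move: na; rewrite -e map_f.
- exact: IH.
Qed.

Lemma iso_def G H f : Permutation (map f (verts G)) (verts H) ->
  Permutation (map (Fe f) (edges G)) (edges H) ->
  Permutation (map (Fs f) (src G)) (src H) -> iso G H.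
Proof. by move=> *; exists f; split. Qed.

Lemma iso_refl G : iso G G.
Proof.
apply: (@iso_def _ _ id).
- by rewrite map_id.
- rewrite (eq_map (g := id)) ?map_id // => -[a l]; by rewrite /Fe map_id.
- by rewrite (eq_map (g := id)) ?map_id // => -[a l].
Qed.

Lemma iso_trans G H K : iso G H -> iso H K -> iso G K.
Proof.
move=> [f [v1 e1 s1]] [g [v2 e2 s2]]; apply: (@iso_def _ _ (g \o f)).
- rewrite map_comp; apply: Permutation_trans v2; exact: Perm_map.
- rewrite (eq_map (g := Fe g \o Fe f)); last by move=> e; rewrite /Fe /= map_comp.
  rewrite map_comp; apply: Permutation_trans e2; exact: Perm_map.
- rewrite (eq_map (g := Fs g \o Fs f)) //.
  rewrite map_comp; apply: Permutation_trans s2; exact: Perm_map.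
Qed.

Lemma iso_sym G H : wf_graph G -> wf_graph H -> iso G H -> iso H G.
Proof.
move=> wG wH [f [hv he hs]].
have uH : uniq (verts H) by case: wH.
have uG : uniq (verts G) by case: wG.
have um : uniq (map f (verts G)) by rewrite (perm_uniq (Perm_perm_eq hv)).
have finj : {in verts G &, injective f} by apply: uniq_map_inj_in.
pose g w := nth 0 (verts G) (index w (map f (verts G))).
have gf : {in verts G, forall v, g (f v) = v}.
  move=> v vG; apply: finj => //.
    by rewrite /g mem_nth // -(size_map f) index_mem map_f.
  rewrite /g -(nth_map 0 (f 0)); last by rewrite -(size_map f) index_mem map_f.
  by rewrite nth_index // map_f.
apply: (@iso_def _ _ g).
- apply: (Permutation_trans (Perm_map g (Permutation_sym hv))).
  have -> : map g (map f (verts G)) = verts G.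
    by rewrite -map_comp -[RHS]map_id; apply/eq_in_map => v /gf.
  exact: Permutation_refl.
- apply: (Permutation_trans (Perm_map (Fe g) (Permutation_sym he))).
  have -> : map (Fe g) (map (Fe f) (edges G)) = edges G.
    rewrite -map_comp -[RHS]map_id; apply: (eq_map_all (wf_edges wG)).
    move=> [a l] /= /allP hl; rewrite /Fe /= -map_comp; congr (_, _).
    by rewrite -[RHS]map_id; apply/eq_in_map => v /hl /gf.
  exact: Permutation_refl.
- apply: (Permutation_trans (Perm_map (Fs g) (Permutation_sym hs))).
  have -> : map (Fs g) (map (Fs f) (src G)) = src G.
    rewrite -map_comp -[RHS]map_id; apply/eq_in_map => -[l v] lv.
    by rewrite /Fs /= gf // (wf_src_vert wG lv).
  exact: Permutation_refl.
Qed.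

Lemma iso_lab G H : iso G H -> lab G =i lab H.
Proof.
move=> [f [_ _ hs]] l; rewrite /lab -(Perm_mem _ (Perm_map fst hs)).
by rewrite -map_comp.
Qed.

Lemma iso_gsort G H : iso G H -> gsort G = gsort H.
Proof. by move=> h; apply/fsetP => l; rewrite !in_gsort (iso_lab h). Qed.

Lemma iso_restrict G H s : iso G H -> iso (g_restrict s G) (g_restrict s H).
Proof.
move=> [f [hv he hs]]; apply: (@iso_def _ _ f) => //=.
have -> : map (Fs f) [seq p <- src G | p.1 \in s] = [seq p <- map (Fs f) (src G) | p.1 \in s].
  by rewrite filter_map.
by apply: perm_eq_Perm; apply: perm_filter; apply: Perm_perm_eq.
Qed.

Lemma iso_rename G H al : iso G H -> iso (g_rename al G) (g_rename al H).
Proof.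
move=> [f [hv he hs]]; apply: (@iso_def _ _ f) => //=.
have := Perm_map (fun p : nat * nat => (al p.1, p.2)) hs.
by rewrite -!map_comp.
Qed.

Lemma lk1_iso G H f : wf_graph H -> Permutation (map (Fs f) (src G)) (src H) ->
  lab G =i lab H -> forall l, lk1 (src H) l = omap f (lk1 (src G) l).
Proof.
move=> wH hs hl l; case: (boolP (l \in lab G)) => lG.
  have [v ev] := lk1_some lG; rewrite ev /=; apply: lk1_in; first by case: wH.
  by rewrite -(Perm_mem _ hs); apply/mapP; exists (l, v) => //; apply: lk1_mem.
by rewrite !lk1_none // -hl.
Qed.

Lemma iso_parl G G' D : wf_graph G -> wf_graph G' -> wf_graph D -> iso G G' ->
  iso (g_par G D) (g_par G' D).
Proof.
move=> wG wG' wD ih; have hl := iso_lab ih; case: ih => f [hv he hs].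
have hk := lk1_iso wG' hs hl.
have hf : forall d, fuse G' D d = omap f (fuse G D d).
  by move=> d; rewrite /fuse; case: (lk2 (src D) d) => //= l; apply: hk.
pose f' v := if v < off G then f v else v - off G + off G'.
have f'G : {in verts G, f' =1 f} by move=> v /lt_off vG; rewrite /f' vG.
have f'D : forall d, f' (d + off G) = d + off G'.
  by move=> d; rewrite /f' ltnNge leq_addl /= addnK.
have sg : forall l, (l \in gsort G) = (l \in gsort G') by move=> l; rewrite !in_gsort hl.
apply: (@iso_def _ _ f').
- rewrite !par_verts map_cat.
  have -> : map f' (verts G) = map f (verts G) by apply/eq_in_map.
  apply: Permutation_app => //.
  rewrite -map_comp (eq_map (g := addn^~ (off G'))) //.
  rewrite (eq_filter (a2 := fun d => ~~ fuse G' D d)) // => d; by rewrite hf; case: (fuse G D d).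
- rewrite !par_edges map_cat; apply: Permutation_app.
    rewrite (eq_map_all (g := Fe f) (wf_edges wG)) // => -[a l] /allP hl' /=.
    by rewrite /Fe /=; congr (_, _); apply/eq_in_map => v /hl' /f'G.
  rewrite -map_comp (eq_map_all (g := fun e => (e.1, map (mv G' D) e.2)) (wf_edges wD)) //.
  move=> [a l] /allP hl' /=; rewrite /Fe /= -map_comp; congr (_, _); apply/eq_in_map => d /hl' dD /=.
  rewrite /mv hf; case e: (fuse G D d) => [w|] /=; last exact: f'D.
  by rewrite f'G // (fuse_vert wG e).
- rewrite !(par_src _ wD) map_cat; apply: Permutation_app.
    have -> : map (Fs f') (src G) = map (Fs f) (src G).
      by apply/eq_in_map => -[l v] lv; rewrite /Fs /= f'G // (wf_src_vert wG lv).
    by [].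
  rewrite -map_comp (eq_filter (a2 := fun p => p.1 \notin gsort G')); last by move=> p; rewrite sg.
  by rewrite (eq_map (g := fun p => (p.1, p.2 + off G'))) // => -[l v]; rewrite /Fs /= f'D.
Qed.

End Iso.

Section Comm.
Variable A : Type.
Notation graph := (graph A).
Implicit Types G H K C D Z W : graph.

Lemma lk1_eqNone s l : (lk1 s l == None) = (l \notin map fst s).
Proof.
case: (boolP (l \in map fst s)) => h; last by rewrite lk1_none.
by have [v ->] := lk1_some h.
Qed.

Lemma isSomeN (T : Type) (o : option T) : ~~ isSome o -> o = None.
Proof. by case: o. Qed.

Lemma mem_par_src G H l w : wf_graph H ->
  ((l, w) \in src (g_par G H)) =
  ((l, w) \in src G) || [&& l \notin lab G, off G <= w & (l, w - off G) \in src H].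
Proof.
move=> wH; rewrite (par_src _ wH) mem_cat; congr (_ || _).
apply/mapP/and3P => [[[l' v]]|[nl le lv]].
  rewrite mem_filter /= => /andP[nl lv] [-> ->]; rewrite -in_gsort nl leq_addl addnK.
  by split.
by exists (l, w - off G); rewrite ?mem_filter /= ?in_gsort ?nl ?lv ?subnK.
Qed.

Lemma mem_par_verts G H v :
  (v \in verts (g_par G H)) =
  (v \in verts G) || [&& off G <= v, v - off G \in verts H & ~~ fuse G H (v - off G)].
Proof.
rewrite par_verts mem_cat; congr (_ || _).
apply/mapP/and3P => [[h]|[le vh fn]].
  by rewrite mem_filter => /andP[fn hH] ->; rewrite leq_addl addnK fn hH.
by exists (v - off G); rewrite ?mem_filter ?fn ?subnK.
Qed.

Lemma fuse_sym G H g w : wf_graph G -> wf_graph H -> fuse H G g = Some w -> fuse G H w = Some g.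
Proof.
move=> wG wH /fuse_some [l [lg lw]]; rewrite (fuse_src _ wH lw).
by apply: lk1_in => //; case: wG.
Qed.

Lemma mv_inj G H : wf_graph G -> wf_graph H -> {in verts G &, injective (mv H G)}.
Proof.
move=> wG wH g1 g2 g1G g2G; rewrite /mv.
case e1: (fuse H G g1) => [w1|]; case e2: (fuse H G g2) => [w2|] /=.
- move=> ew; move: (fuse_sym wG wH e1) (fuse_sym wG wH e2); rewrite ew => -> [] //.
- move=> ew; have := lt_off (fuse_vert wH e1); by rewrite ew ltnNge leq_addl.
- move=> ew; have := lt_off (fuse_vert wH e2); by rewrite -ew ltnNge leq_addl.
- by apply: addIn.
Qed.

Lemma perm_map_inj (f : nat -> nat) (s t : seq nat) : uniq s -> uniq t ->
  {in s &, injective f} -> (forall x, (x \in t) = (x \in map f s)) -> Permutation (map f s) t.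
Proof.
move=> us ut fi h; apply: perm_eq_Perm; apply: uniq_perm.
- by rewrite map_inj_in_uniq.
- by [].
- by move=> x; rewrite h.
Qed.

Lemma perm_src f G H : wf_graph G -> wf_graph H ->
  (forall p, (p \in src H) = (p \in map (Fs f) (src G))) ->
  Permutation (map (Fs f) (src G)) (src H).
Proof.
move=> wG wH h; apply: perm_eq_Perm; apply: uniq_perm.
- apply: (@map_uniq _ _ fst); rewrite -map_comp.
  by rewrite (eq_map (g := fst)) //; case: wG.
- by apply: (@map_uniq _ _ fst); case: wH.
- by move=> p; rewrite h.
Qed.

Lemma iso_comm G H : wf_graph G -> wf_graph H -> iso (g_par G H) (g_par H G).
Proof.
move=> wG wH.
have wGH := wf_par wG wH; have wHG := wf_par wH wG.
have uLG : uniq (lab G) by case: wG.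
have uLH : uniq (lab H) by case: wH.
pose f v := if v < off G then mv H G v else v - off G.
have fG : {in verts G, f =1 mv H G} by move=> v /lt_off h; rewrite /f h.
have fH : forall h, f (h + off G) = h by move=> h; rewrite /f ltnNge leq_addl /= addnK.
have fmv : {in verts H, forall h, f (mv G H h) = h}.
  move=> h hH; rewrite /mv; case e: (fuse G H h) => [g|] /=; last exact: fH.
  have [l [lh lg]] := fuse_some e.
  by rewrite fG ?(fuse_vert wG e) // /mv (fuse_src _ wG lg) (lk1_in uLH lh).
have vpar : forall v, v \in verts (g_par G H) ->
    (v < off G /\ v \in verts G) \/ (off G <= v /\ v - off G \in verts H /\ fuse G H (v - off G) = None).
  move=> v; rewrite mem_par_verts => /orP [vG|/and3P [le vh /isSomeN fn]]; first by left; rewrite lt_off.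
  by right.
apply: (@iso_def _ _ _ f).
- apply: perm_map_inj; first by case: wGH.
  + by case: wHG.
  + move=> v1 v2 /vpar [[lt1 v1G]|[le1 [h1 n1]]] /vpar [[lt2 v2G]|[le2 [h2 n2]]].
    * by rewrite !fG //; apply: mv_inj.
    * rewrite fG // /f ltnNge le2 /= /mv; case e: (fuse H G v1) => [w|] /= ew.
        by move: n2; rewrite -ew (fuse_sym wG wH e).
      by have := lt_off h2; rewrite -ew ltnNge leq_addl.
    * rewrite (fG v2) // /f ltnNge le1 /= /mv; case e: (fuse H G v2) => [w|] /= ew.
        by move: n1; rewrite ew (fuse_sym wG wH e).
      by have := lt_off h1; rewrite ew ltnNge leq_addl.
    * rewrite /f ltnNge le1 ltnNge le2 /= => e.
      by rewrite -(subnK le1) -(subnK le2) e.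
  + move=> x; apply/idP/mapP.
    * rewrite mem_par_verts => /orP [xH|/and3P [le xg /isSomeN fn]].
        case e: (fuse G H x) => [g|].
          have [l [lx lg]] := fuse_some e; exists g.
            by rewrite mem_par_verts (wf_src_vert wG lg).
          by rewrite fG ?(wf_src_vert wG lg) // /mv (fuse_src _ wG lg) (lk1_in uLH lx).
        exists (x + off G); last by rewrite fH.
        by rewrite mem_par_verts leq_addl addnK xH e orbT.
      exists (x - off H); first by rewrite mem_par_verts xg.
      by rewrite fG // /mv fn /= subnK.
    * move=> [v /vpar [[lt vG]|[le [vh fn]]] ->].
        rewrite fG // mem_par_verts /mv; case e: (fuse H G v) => [w|] /=.
          by rewrite (fuse_vert wH e).
        by rewrite leq_addl addnK vG e orbT.
      by rewrite /f ltnNge le /= mem_par_verts vh.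
- rewrite !par_edges map_cat.
  have -> : map (Fe f) (edges G) = map (fun e => (e.1, map (mv H G) e.2)) (edges G).
    apply: (eq_map_all (wf_edges wG)) => -[a l] /allP hl; rewrite /Fe /=; congr (_, _).
    by apply/eq_in_map => v /hl /fG.
  have -> : map (Fe f) [seq (e.1, map (mv G H) e.2) | e <- edges H] = edges H.
    rewrite -map_comp -[RHS]map_id; apply: (eq_map_all (wf_edges wH)) => -[a l] /allP hl.
    rewrite /Fe /= -map_comp; congr (_, _); rewrite -[RHS]map_id.
    by apply/eq_in_map => v /hl /fmv.
  exact: Permutation_app_comm.
- apply: perm_src => // -[l w]; apply/idP/mapP.
  + rewrite mem_par_src // => /orP [lwH|/and3P [nlH le lg]].
      case: (boolP (l \in lab G)) => lG.
        have [g eg] := lk1_some lG; have lg := lk1_mem eg.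
        exists (l, g); first by rewrite mem_par_src // lg.
        by rewrite /Fs /= fG ?(wf_src_vert wG lg) // /mv (fuse_src _ wG lg) (lk1_in uLH lwH).
      exists (l, w + off G); last by rewrite /Fs /= fH.
      by rewrite mem_par_src // lG leq_addl addnK lwH orbT.
    exists (l, w - off H); first by rewrite mem_par_src // lg.
    rewrite /Fs /= fG ?(wf_src_vert wG lg) // /mv (fuse_src _ wG lg) lk1_none //=.
    by rewrite subnK.
  + move=> [[l' v]]; rewrite mem_par_src // => /orP [lvG|/and3P [nlG le lh]] [-> ->].
      rewrite /Fs /= fG ?(wf_src_vert wG lvG) // /mv (fuse_src _ wG lvG).
      case: (boolP (l' \in lab H)) => lH.
        have [h eh] := lk1_some lH; rewrite eh /= mem_par_src //.
        by rewrite (lk1_mem eh).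
      by rewrite lk1_none //= mem_par_src // lH leq_addl addnK lvG orbT.
    by rewrite /Fs /= /f ltnNge le /= mem_par_src // lh.
Qed.

End Comm.

Section Assoc.
Variable A : Type.
Notation graph := (graph A).
Implicit Types G H K C D Z W : graph.

Lemma iso_assoc G H K : wf_graph G -> wf_graph H -> wf_graph K ->
  iso (g_par (g_par G H) K) (g_par G (g_par H K)).
Proof.
move=> wG wH wK.
have wGH := wf_par wG wH; have wHK := wf_par wH wK.
have uLG : uniq (lab G) by case: wG.
have uLH : uniq (lab H) by case: wH.
have uLGH : uniq (lab (g_par G H)) by case: wGH.
set o1 := off G; set o2 := off (g_par G H); set o3 := off H.
pose f v := if v < o2 then v else v - o2 + o3 + o1.
have fL : {in verts (g_par G H), f =1 id} by move=> v /lt_off h; rewrite /f h.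
have fK : forall k, f (k + o2) = k + o3 + o1 by move=> k; rewrite /f ltnNge leq_addl /= addnK.
have A1 : {in verts H, forall h, fuse G (g_par H K) h = fuse G H h}.
  move=> h hH; case: (boolP (h \in svs H)) => hs.
    case/mapP: hs => -[l h'] lh /= eh; rewrite -eh in lh.
    have lhk : (l, h) \in src (g_par H K) by rewrite mem_par_src // lh.
    by rewrite (fuse_src _ wH lh) (fuse_src _ wHK lhk).
  rewrite (fuse_nsrc _ hs) fuse_nsrc //; apply/mapP => -[[l h'] + /= eh]; rewrite -eh.
  rewrite mem_par_src // => /orP [lh|/and3P [_ le _]].
    by move: hs; rewrite /svs; case/mapP; exists (l, h).
  by have := lt_off hH; rewrite ltnNge le.
have key : forall k, k \in verts K ->
    ((~~ fuse (g_par G H) K k) = (~~ fuse H K k) && (~~ fuse G (g_par H K) (k + o3))) /\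
    f (mv (g_par G H) K k) = mv G (g_par H K) (mv H K k).
  move=> k kK; case: (boolP (k \in svs K)) => ks; last first.
    have nk : k + o3 \notin svs (g_par H K).
      apply/mapP => -[[l w] + /= ew]; rewrite -ew mem_par_src // => /orP [lh|/and3P [_ _ lk]].
        by have := lt_off (wf_src_vert wH lh); rewrite -/o3 ltnNge leq_addl.
      by move: ks; rewrite /svs => /mapP; apply; exists (l, k) => //; move: lk; rewrite -/o3 addnK.
    by rewrite /mv !(fuse_nsrc _ ks) (fuse_nsrc _ nk) /= fK.
  case/mapP: ks => -[l k'] lk /= ek; rewrite -ek in lk.
  rewrite /mv (fuse_src _ wK lk) (fuse_src _ wK lk).
  case: (boolP (l \in lab H)) => lH.
    have [h eh] := lk1_some lH; have lh := lk1_mem eh; rewrite eh /=.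
    have lhk : (l, h) \in src (g_par H K) by rewrite mem_par_src // lh.
    rewrite (fuse_src _ wHK lhk).
    case: (boolP (l \in lab G)) => lG.
      have [g eg] := lk1_some lG; have lg := lk1_mem eg; rewrite eg /=.
      have lgh : (l, g) \in src (g_par G H) by rewrite mem_par_src // lg.
      rewrite (lk1_in uLGH lgh) /= fL //; exact: wf_src_vert wGH lgh.
    have lgh : (l, h + o1) \in src (g_par G H).
      by rewrite mem_par_src // lG leq_addl addnK lh orbT.
    rewrite (lk1_in uLGH lgh) (@lk1_none (src G) l lG) /= fL //; exact: wf_src_vert wGH lgh.
  rewrite (@lk1_none (src H) l lH) /=.
  have lhk : (l, k + o3) \in src (g_par H K) by rewrite mem_par_src // lH leq_addl addnK lk orbT.
  rewrite (fuse_src _ wHK lhk).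
  case: (boolP (l \in lab G)) => lG.
    have [g eg] := lk1_some lG; have lg := lk1_mem eg; rewrite eg /=.
    have lgh : (l, g) \in src (g_par G H) by rewrite mem_par_src // lg.
    rewrite (lk1_in uLGH lgh) /= fL //; exact: wf_src_vert wGH lgh.
  have nGH : l \notin lab (g_par G H) by rewrite mem_lab_par negb_or lG lH.
  by rewrite (@lk1_none (src G) l lG) (@lk1_none _ l nGH) /= fK.
have A1' : {in verts H, forall h, mv G (g_par H K) h = mv G H h} by move=> h hH; rewrite /mv A1.
apply: (@iso_def _ _ _ f).
- have -> : map f (verts (g_par (g_par G H) K)) = verts (g_par G (g_par H K)); last exact: Permutation_refl.
  rewrite [verts (g_par (g_par G H) K)]par_verts map_cat.
  have -> : map f (verts (g_par G H)) = verts (g_par G H).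
    by rewrite -[RHS]map_id; apply/eq_in_map.
  rewrite -map_comp (eq_map (g := fun k => k + o3 + o1)) // par_verts.
  rewrite [verts (g_par G (g_par H K))]par_verts -/o1 par_verts filter_cat map_cat -catA.
  congr (_ ++ _); congr (_ ++ _).
    by congr map; apply: eq_in_filter => h hH; rewrite A1.
  rewrite filter_map -map_comp -filter_predI; congr map.
  by apply: eq_in_filter => k kK; rewrite /predI /preim /= (key k kK).1 andbC.
- have -> : map (Fe f) (edges (g_par (g_par G H) K)) = edges (g_par G (g_par H K)); last exact: Permutation_refl.
  rewrite [edges (g_par (g_par G H) K)]par_edges map_cat.
  have -> : map (Fe f) (edges (g_par G H)) = edges (g_par G H).
    rewrite -[RHS]map_id; apply: (eq_map_all (wf_edges wGH)) => -[a l] /allP hl.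
    rewrite /Fe /=; congr (_, _); rewrite -[RHS]map_id; apply/eq_in_map => v /hl; exact: fL.
  rewrite par_edges [edges (g_par G (g_par H K))]par_edges par_edges map_cat -catA.
  congr (_ ++ _); congr (_ ++ _).
    apply: (eq_map_all (wf_edges wH)) => -[a l] /allP hl /=; congr (_, _).
    by apply/eq_in_map => h /hl hH; rewrite A1'.
  rewrite -!map_comp; apply: (eq_map_all (wf_edges wK)) => -[a l] /allP hl /=.
  rewrite /Fe /= -!map_comp; congr (_, _); apply/eq_in_map => k /hl kK /=.
  exact: (key k kK).2.
- have -> : map (Fs f) (src (g_par (g_par G H) K)) = src (g_par G (g_par H K)); last exact: Permutation_refl.
  rewrite (par_src _ wK) map_cat.
  have -> : map (Fs f) (src (g_par G H)) = src (g_par G H).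
    rewrite -[RHS]map_id; apply/eq_in_map => -[l v] lv.
    by rewrite /Fs /= fL //; apply: wf_src_vert wGH lv.
  rewrite -map_comp (eq_map (g := fun p => (p.1, p.2 + o3 + o1))); last by move=> p; rewrite /Fs /= fK.
  rewrite (par_src _ wH) (par_src _ wHK) (par_src _ wK) -/o1 filter_cat map_cat -catA.
  congr (_ ++ _); congr (_ ++ _).
  rewrite filter_map -map_comp -filter_predI; congr map.
  apply: eq_filter => -[l v]; rewrite /predI /preim /= !in_gsort mem_lab_par negb_or andbC.
  by [].
Qed.

End Assoc.

Section Literal.
Variable A : Type.
Notation graph := (graph A).
Implicit Types G H K C D Z W : graph.

Lemma map_filter_eq (T : eqType) (U : Type) (f g : T -> U) (P Q : pred T) s :
  {in s, P =1 Q} -> {in s, f =1 g} -> map f (filter P s) = map g (filter Q s).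
Proof.
move=> hPQ hfg; rewrite (eq_in_filter hPQ); apply/eq_in_map => x.
by rewrite mem_filter => /andP[_ xs]; apply: hfg.
Qed.

Lemma graph_eq G H : verts G = verts H -> edges G = edges H -> src G = src H -> G = H.
Proof. by case: G => v e s; case: H => v' e' s' /= -> -> ->. Qed.

Lemma verts_rename G b : verts (g_rename b G) = verts G. Proof. by []. Qed.
Lemma edges_rename G b : edges (g_rename b G) = edges G. Proof. by []. Qed.
Lemma src_rename G b : src (g_rename b G) = [seq (b p.1, p.2) | p <- src G]. Proof. by []. Qed.
Lemma verts_restrict G r : verts (g_restrict r G) = verts G. Proof. by []. Qed.
Lemma edges_restrict G r : edges (g_restrict r G) = edges G. Proof. by []. Qed.
Lemma src_restrict G r : src (g_restrict r G) = [seq p <- src G | p.1 \in r]. Proof. by []. Qed.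
Lemma off_rename G b : off (g_rename b G) = off G. Proof. by []. Qed.
Lemma off_restrict G r : off (g_restrict r G) = off G. Proof. by []. Qed.

Lemma lk2_map_fst (b : nat -> nat) s v : lk2 [seq (b p.1, p.2) | p <- s] v = omap b (lk2 s v).
Proof. rewrite /lk2; elim: s => //= -[l w] s IH /=; by case: eqP. Qed.

Lemma lk1_map_fst (b : nat -> nat) s l : injective b -> lk1 [seq (b p.1, p.2) | p <- s] (b l) = lk1 s l.
Proof. move=> bi; rewrite /lk1; elim: s => //= -[m w] s IH /=; by rewrite inj_eq //; case: eqP. Qed.

Lemma lk1_filter (r : {fset nat}) s l : lk1 [seq p <- s | p.1 \in r] l = if l \in r then lk1 s l else None.
Proof.
elim: s => [|[m w] s IH]; first by rewrite /lk1 /=; case: (l \in r).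
move: IH; rewrite /lk1 /= => IH.
case mr: (m \in r) => /=; case: (m =P l) => [em|ne] /=.
- by rewrite -em mr.
- exact: IH.
- by rewrite IH -em mr.
- exact: IH.
Qed.

Lemma lab_rename G (b : nat -> nat) : lab (g_rename b G) = map b (lab G).
Proof. by rewrite /lab /= -!map_comp. Qed.

Lemma mem_lab_restrict G (r : {fset nat}) l : (l \in lab (g_restrict r G)) = (l \in r) && (l \in lab G).
Proof.
rewrite /lab /=; apply/mapP/andP => [[p + ->]|[lr /mapP [p pG el]]].
  by rewrite mem_filter => /andP[pr pG]; split => //; apply: map_f.
by exists p => //; rewrite mem_filter -el lr.
Qed.

Lemma rename_restrict G (b : nat -> nat) r : injective b ->
  g_rename b (g_restrict r G) = g_restrict [fset b l | l in r]%fset (g_rename b G).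
Proof.
move=> bi; apply: graph_eq => //=; rewrite filter_map; congr map.
by apply: eq_filter => p /=; rewrite mem_imfset.
Qed.

Lemma fuse_rename G H (b : nat -> nat) : injective b ->
  fuse (g_rename b G) (g_rename b H) =1 fuse G H.
Proof.
move=> bi v; rewrite /fuse /= lk2_map_fst; case: (lk2 (src H) v) => //= l.
exact: lk1_map_fst.
Qed.

Lemma rename_par G H (b : nat -> nat) : injective b ->
  g_rename b (g_par G H) = g_par (g_rename b G) (g_rename b H).
Proof.
move=> bi; have hf := fuse_rename G H bi.
have hm : mv (g_rename b G) (g_rename b H) =1 mv G H by move=> v; rewrite /mv hf.
apply: graph_eq.
- rewrite verts_rename !par_verts !verts_rename off_rename; congr (_ ++ _); congr map.
  by apply: eq_filter => v; rewrite hf.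
- rewrite edges_rename !par_edges !edges_rename; congr (_ ++ _); apply: eq_map => e; by rewrite (eq_map hm).
- rewrite src_rename !par_src0 map_cat src_rename; congr (_ ++ _).
  rewrite src_rename filter_map -map_comp -map_comp.
  rewrite [in RHS](eq_filter (a2 := fun p => p.1 \notin gsort G)); last first.
    by move=> p /=; rewrite !in_gsort lab_rename mem_map.
  by apply: eq_map => p /=; rewrite hm.
Qed.

Lemma rename_rename G (a b : nat -> nat) : g_rename b (g_rename a G) = g_rename (b \o a) G.
Proof. by apply: graph_eq => //=; rewrite -map_comp. Qed.

Lemma restrict_restrict G r q : g_restrict q (g_restrict r G) = g_restrict (r `&` q)%fset G.
Proof.
apply: graph_eq => //=; rewrite -filter_predI; apply: eq_filter => p.
by rewrite /predI /= in_fsetI andbC.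
Qed.

Lemma restrict_fresh G (g : nat -> nat) (r : {fset nat}) : injective g ->
  (forall l, l \in r -> g l = l) -> g_restrict r G = g_restrict r (g_rename g G).
Proof.
move=> gi gr; apply: graph_eq => //=; rewrite filter_map.
rewrite [in RHS](eq_filter (a2 := fun p => p.1 \in r)); last first.
  move=> [l v]; rewrite /preim /=; apply/idP/idP => [glr|lr]; last by rewrite gr.
  by have := gr _ glr => /gi e; rewrite -e.
rewrite -[LHS]map_id; apply/eq_in_map => -[l v]; rewrite mem_filter /= => /andP[lr _].
by rewrite gr.
Qed.

Lemma restrict_par_swap Z D (r : {fset nat}) :
  (forall l, l \in lab Z -> l \notin r -> l \notin lab D) ->
  g_par (g_restrict r Z) D = g_restrict (r `|` gsort D)%fset (g_par Z D).
Proof.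
move=> dj.
have hf : fuse (g_restrict r Z) D =1 fuse Z D.
  move=> v; rewrite /fuse; case e: (lk2 (src D) v) => [l|] //=.
  have lD : l \in lab D by apply/mapP; exists (l, v) => //; apply: lk2_mem.
  rewrite lk1_filter; case: (boolP (l \in r)) => lr //.
  rewrite lk1_none //; apply/negP => lZ; by move: (dj _ lZ lr); rewrite lD.
have hm : mv (g_restrict r Z) D =1 mv Z D by move=> v; rewrite /mv hf.
apply: graph_eq.
- rewrite verts_restrict !par_verts verts_restrict off_restrict; congr (_ ++ _); congr map.
  by apply: eq_filter => v; rewrite hf.
- rewrite edges_restrict !par_edges edges_restrict; congr (_ ++ _); apply: eq_map => e; by rewrite (eq_map hm).
- rewrite src_restrict !par_src0 src_restrict filter_cat; congr (_ ++ _).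
    apply: eq_in_filter => -[l v] lv /=; rewrite in_fsetU.
    case: (boolP (l \in r)) => //= lr; rewrite in_gsort; apply/esym/negbTE.
    by apply: dj lr; apply/mapP; exists (l, v).
  rewrite filter_map -filter_predI; apply: map_filter_eq => -[l v] lv; last by rewrite /= hm.
  rewrite /predI /preim /= !in_gsort mem_lab_restrict in_fsetU.
  have lD : l \in lab D by apply/mapP; exists (l, v).
  rewrite in_gsort lD orbT /=; case: (boolP (l \in lab Z)) => lZ; rewrite ?andbF //.
  case: (boolP (l \in r)) => lr //=; by move: (dj _ lZ lr); rewrite lD.
Qed.

Lemma filter_fset0 (s : seq (nat * nat)) : [seq p <- s | p.1 \in fset0] = [::].
Proof. by elim: s => //= p s IH; rewrite in_fset0. Qed.

Lemma restrict_empty Z r : src (g_restrict r Z) = [::] -> g_restrict r Z = g_restrict fset0 Z.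
Proof. by move=> e; apply: graph_eq => //; rewrite e src_restrict filter_fset0. Qed.

Lemma restrict0_rename x C (a a' : nat -> nat) : cancel a a' -> cancel a' a ->
  g_restrict fset0 (g_par (g_rename a x) C) = g_restrict fset0 (g_par x (g_rename a' C)).
Proof.
move=> c1 c2.
have hf : fuse (g_rename a x) C =1 fuse x (g_rename a' C).
  move=> v; rewrite /fuse /= lk2_map_fst; case: (lk2 (src C) v) => //= l.
  by rewrite -{1}(c2 l) lk1_map_fst //; apply: can_inj c1.
have hm : mv (g_rename a x) C =1 mv x (g_rename a' C) by move=> v; rewrite /mv hf.
apply: graph_eq.
- rewrite !verts_restrict !par_verts verts_rename off_rename; congr (_ ++ _); congr map.
  by apply: eq_filter => v; rewrite hf.
- rewrite !edges_restrict !par_edges edges_rename; congr (_ ++ _); apply: eq_map => e; by rewrite (eq_map hm).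
- by rewrite !src_restrict !filter_fset0.
Qed.

Lemma restrict0_sub x D : wf_graph D ->
  g_restrict fset0 (g_par x D) = g_restrict fset0 (g_par x (g_restrict (gsort x) D)).
Proof.
move=> wD; have wD' := wf_restrict (gsort x) wD.
have uS : uniq (svs D) by case: wD.
have hf : fuse x D =1 fuse x (g_restrict (gsort x) D).
  move=> v; case: (boolP (v \in svs D)) => vs; last first.
    rewrite !fuse_nsrc //; apply: contra vs => /mapP [p]; rewrite mem_filter => /andP[_ pD] ->.
    exact: map_f.
  case/mapP: vs => -[l w] lw /= ew; rewrite -ew in lw.
  rewrite (fuse_src _ wD lw); case: (boolP (l \in gsort x)) => lx.
    by rewrite (fuse_src (l := l) _ wD') //= mem_filter lx.
  rewrite lk1_none -?in_gsort // fuse_nsrc //; apply/mapP => -[[l' w'] + /= ew'].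
  rewrite -ew' mem_filter /= => /andP[l'x l'D].
  have := lk2_in uS lw; rewrite (lk2_in uS l'D) => -[el]; by move: l'x; rewrite el (negbTE lx).
have hm : mv x D =1 mv x (g_restrict (gsort x) D) by move=> v; rewrite /mv hf.
apply: graph_eq.
- rewrite !verts_restrict !par_verts verts_restrict; congr (_ ++ _); congr map.
  by apply: eq_filter => v; rewrite hf.
- rewrite !edges_restrict !par_edges edges_restrict; congr (_ ++ _); apply: eq_map => e; by rewrite (eq_map hm).
- by rewrite !src_restrict !filter_fset0.
Qed.

End Literal.

Section Swapper.

Definition swapper (Hs : seq nat) (M n : nat) : nat :=
  if n \in Hs then M + index n Hs
  else if (M <= n) && (n < M + size Hs) then nth 0 Hs (n - M) else n.

Lemma swapper_inv Hs M : uniq Hs -> all (fun h => h < M) Hs -> involutive (swapper Hs M).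
Proof.
move=> uH bH n; rewrite /swapper.
case: (boolP (n \in Hs)) => nH.
  have iM : M + index n Hs \notin Hs.
    by apply/negP => /(allP bH); rewrite ltnNge leq_addr.
  by rewrite (negbTE iM) leq_addr /= ltn_add2l index_mem nH /= addKn nth_index.
case c: ((M <= n) && (n < M + size Hs)); last by rewrite (negbTE nH) c.
case/andP: c => le lt.
have hin : nth 0 Hs (n - M) \in Hs by apply: mem_nth; rewrite ltn_subLR.
by rewrite hin index_uniq ?subnKC // ltn_subLR.
Qed.

Lemma swapper_fix Hs M n : n \notin Hs -> n < M -> swapper Hs M n = n.
Proof. by move=> nH nM; rewrite /swapper (negbTE nH) leqNgt nM. Qed.

Lemma swapper_big Hs M n : n \in Hs -> M <= swapper Hs M n.
Proof. by move=> nH; rewrite /swapper nH leq_addr. Qed.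

Lemma lt_foldr (s : seq nat) v : v \in s -> v < (foldr maxn 0 s).+1.
Proof.
rewrite ltnS; elim: s => //= a s IH; rewrite in_cons.
by case/orP => [/eqP ->|/IH h]; rewrite leq_max ?leqnn // h orbT.
Qed.

End Swapper.

Section NF.
Variable A : Type.
Notation graph := (graph A).
Notation term := (term A).
Implicit Types G H K C D Z W : graph.

Definition NF (r : {fset nat}) (a : nat -> nat) C x := g_restrict r (g_par (g_rename a x) C).

Lemma wf_NF r a C x : injective a -> wf_graph C -> wf_graph x -> wf_graph (NF r a C x).
Proof. by move=> ai wC wx; apply: wf_restrict; apply: wf_par => //; apply: wf_rename. Qed.

Lemma par_step (sg r : {fset nat}) (a a' : nat -> nat) C D :
  cancel a a' -> cancel a' a -> wf_graph C -> wf_graph D ->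
  exists r1 a1 a1' C1, [/\ cancel a1 a1', cancel a1' a1, wf_graph C1 &
    forall x, wf_graph x -> gsort x = sg -> iso (g_par (NF r a C x) D) (NF r1 a1 C1 x)].
Proof.
move=> c1 c2 wC wD.
set S := ([fset a l | l in sg] `|` gsort C)%fset.
set Hs := enum_fset (S `\` r)%fset.
set M := (foldr maxn 0 (enum_fset (S `|` r `|` gsort D)%fset)).+1.
have bM : forall l, l \in (S `|` r `|` gsort D)%fset -> l < M by move=> l h; apply: lt_foldr.
have uH : uniq Hs by apply: fset_uniq.
have bH : all (fun h => h < M) Hs.
  apply/allP => h; rewrite -[h \in Hs]/(h \in (S `\` r)%fset) in_fsetD => /andP[_ hS].
  by apply: bM; apply/fsetUP; left; apply/fsetUP; left.
pose g := swapper Hs M.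
have ginv : involutive g by apply: swapper_inv.
have ginj : injective g by apply: inv_inj.
have gfix : forall l, l \in r -> g l = l.
  move=> l lr; apply: swapper_fix.
    by rewrite -[l \in Hs]/(l \in (S `\` r)%fset) in_fsetD lr.
  by apply: bM; rewrite !in_fsetU lr orbT.
have gS : forall m, m \in S -> g m \notin r -> g m \notin lab D.
  move=> m mS; case: (boolP (m \in r)) => mr; first by rewrite gfix // mr.
  move=> _; apply/negP => gD.
  have mH : m \in Hs by rewrite -[m \in Hs]/(m \in (S `\` r)%fset) in_fsetD mr mS.
  have := bM (g m); rewrite in_fsetU [g m \in gsort D]in_gsort gD orbT => /(_ isT).
  by rewrite ltnNge swapper_big.
exists (r `|` gsort D)%fset, (g \o a), (a' \o g), (g_par (g_rename g C) D); split.
- by move=> l /=; rewrite ginv c1.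
- by move=> l /=; rewrite c2 ginv.
- by apply: wf_par => //; apply: wf_rename.
move=> x wx sx.
have ai : injective a by apply: can_inj c1.
have gai : injective (g \o a) by apply: inj_comp.
rewrite /NF (restrict_fresh _ ginj gfix) rename_par // rename_rename.
rewrite restrict_par_swap; last first.
  move=> l; rewrite mem_lab_par !lab_rename => /orP [] /mapP [m mH ->].
    apply: gS; rewrite in_fsetU; apply/orP; left; apply: in_imfset.
    by rewrite -sx in_gsort.
  by apply: gS; rewrite in_fsetU in_gsort mH orbT.
apply: iso_restrict; apply: iso_assoc => //; by apply: wf_rename.
Qed.

Fixpoint cnt (t : term) : nat :=
  match t with
  | TX => 1
  | TRestrict _ t => cnt t
  | TRename _ t => cnt t
  | TPar t1 t2 => cnt t1 + cnt t2
  | _ => 0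
  end.

Lemma cnt0_eval t x x' y : cnt t = 0 -> eval x y t = eval x' y t.
Proof.
elim: t => //= [s t IH|f t IH|t1 IH1 t2 IH2] h; rewrite ?IH //.
by move: h => /eqP; rewrite addn_eq0 => /andP[/eqP h1 /eqP h2]; rewrite IH1 // IH2.
Qed.

Definition E0 : graph := Graph [::] [::] [::].
Lemma wf_E0 : wf_graph E0. Proof. by split. Qed.

Lemma nf_onehole (sg : {fset nat}) t y : term_G t -> cnt t = 1 -> (forall i, wf_graph (y i)) ->
  exists r a a' C, [/\ cancel a a', cancel a' a, wf_graph C &
    forall x, wf_graph x -> gsort x = sg -> iso (eval x y t) (NF r a C x)].
Proof.
move=> + + wy; elim: t => //=.
- move=> _ _; exists sg, id, id, E0; split; [by [] | by [] | exact: wf_E0 |].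
  move=> x wx sx.
  have -> : NF sg id E0 x = x; last exact: iso_refl.
  apply: graph_eq.
  + by rewrite /NF verts_restrict par_verts /= cats0.
  + by rewrite /NF edges_restrict par_edges /= cats0.
  + rewrite /NF src_restrict par_src0 /= cats0.
    have -> : [seq (p.1, p.2) | p <- src x] = src x.
      by rewrite -[RHS]map_id; apply: eq_map => -[].
    apply/all_filterP; apply/allP => p px; rewrite -sx in_gsort; exact: map_f.
- move=> s t IH ht c; have [r [a [a' [C [c1 c2 wC h]]]]] := IH ht c.
  exists (r `&` s)%fset, a, a', C; split => // x wx sx.
  rewrite /NF -restrict_restrict; apply: iso_restrict; exact: h.
- move=> b t IH [[bb _] ht] c; have [b' b1 b2] := bb.
  have [r [a [a' [C [c1 c2 wC h]]]]] := IH ht c.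
  have bi : injective b by apply: can_inj b1.
  exists [fset b l | l in r]%fset, (b \o a), (a' \o b'), (g_rename b C); split.
  + by move=> l /=; rewrite b1 c1.
  + by move=> l /=; rewrite c2 b2.
  + by apply: wf_rename.
  move=> x wx sx; apply: iso_trans (iso_rename b (h x wx sx)) _.
  rewrite /NF (rename_restrict _ _ bi) (rename_par _ _ bi) rename_rename; exact: iso_refl.
- move=> t1 IH1 t2 IH2 [h1 h2] c.
  case e1: (cnt t1) c => [|n1] c /=.
    rewrite add0n in c.
    have [r [a [a' [C [c1 c2 wC h]]]]] := IH2 h2 c.
    pose D := eval E0 y t1; have wD : wf_graph D by apply: wf_eval => //; exact: wf_E0.
    have [r1 [a1 [a1' [C1 [d1 d2 wC1 h']]]]] := par_step sg r c1 c2 wC wD.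
    exists r1, a1, a1', C1; split => // x wx sx.
    rewrite (@cnt0_eval t1 x E0 y e1) -/D.
    have wE := wf_eval h2 wx wy.
    have wW : wf_graph (NF r a C x) by apply: wf_NF => //; apply: can_inj c1.
    apply: iso_trans (iso_comm wD wE) _.
    apply: iso_trans (iso_parl wE wW wD (h x wx sx)) _; exact: h' x wx sx.
  have n10 : n1 = 0 by lia.
  have c' : cnt t2 = 0 by lia.
  subst n1.
  have [r [a [a' [C [c1 c2 wC h]]]]] := IH1 h1 e1.
  pose D := eval E0 y t2; have wD : wf_graph D by apply: wf_eval => //; exact: wf_E0.
  have [r1 [a1 [a1' [C1 [d1 d2 wC1 h']]]]] := par_step sg r c1 c2 wC wD.
  exists r1, a1, a1', C1; split => // x wx sx.
  rewrite (@cnt0_eval t2 x E0 y c') -/D.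
  have wE := wf_eval h1 wx wy.
  have wW : wf_graph (NF r a C x) by apply: wf_NF => //; apply: can_inj c1.
  apply: iso_trans (iso_parl wE wW wD (h x wx sx)) _; exact: h' x wx sx.
Qed.

End NF.

Section Multi.
Variable A : Type.
Notation graph := (graph A).
Notation term := (term A).
Implicit Types G H K C D Z W : graph.

Definition upd (y : nat -> graph) k z := fun i => if i == k then z else y i.

Fixpoint maxY (t : term) : nat :=
  match t with
  | TY i => i.+1
  | TRestrict _ t => maxY t
  | TRename _ t => maxY t
  | TPar t1 t2 => maxn (maxY t1) (maxY t2)
  | _ => 0
  end.

Fixpoint allY k (t : term) : term :=
  match t with
  | TX => TY A k
  | TRestrict s t => TRestrict s (allY k t)
  | TRename f t => TRename f (allY k t)
  | TPar t1 t2 => TPar (allY k t1) (allY k t2)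
  | t => t
  end.

Fixpoint onlyfirst k (t : term) : term :=
  match t with
  | TRestrict s t => TRestrict s (onlyfirst k t)
  | TRename f t => TRename f (onlyfirst k t)
  | TPar t1 t2 => if cnt t1 == 0 then TPar t1 (onlyfirst k t2)
                  else TPar (onlyfirst k t1) (allY k t2)
  | t => t
  end.

Fixpoint dropfirst k (t : term) : term :=
  match t with
  | TX => TY A k
  | TRestrict s t => TRestrict s (dropfirst k t)
  | TRename f t => TRename f (dropfirst k t)
  | TPar t1 t2 => if cnt t1 == 0 then TPar t1 (dropfirst k t2)
                  else TPar (dropfirst k t1) t2
  | t => t
  end.

Lemma eval_fresh x y k z t : maxY t <= k -> eval x (upd y k z) t = eval x y t.
Proof.
elim: t => //=.
- by move=> i lt; rewrite /upd ltn_eqF.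
- by move=> s t IH h; rewrite IH.
- by move=> f t IH h; rewrite IH.
- by move=> t1 IH1 t2 IH2; rewrite geq_max => /andP[h1 h2]; rewrite IH1 // IH2.
Qed.

Lemma eval_allY x y k z t : maxY t <= k -> eval x (upd y k z) (allY k t) = eval z y t.
Proof.
elim: t => //=.
- by move=> _; rewrite /upd eqxx.
- by move=> i lt; rewrite /upd ltn_eqF.
- by move=> s t IH h; rewrite IH.
- by move=> f t IH h; rewrite IH.
- by move=> t1 IH1 t2 IH2; rewrite geq_max => /andP[h1 h2]; rewrite IH1 // IH2.
Qed.

Lemma eval_drop x y k t : maxY t <= k -> eval x (upd y k x) (dropfirst k t) = eval x y t.
Proof.
elim: t => //=.
- by move=> _; rewrite /upd eqxx.
- by move=> i lt; rewrite /upd ltn_eqF.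
- by move=> s t IH h; rewrite IH.
- by move=> f t IH h; rewrite IH.
- move=> t1 IH1 t2 IH2; rewrite geq_max => /andP[h1 h2].
  by case: (cnt t1 == 0) => /=; rewrite ?IH1 ?IH2 ?eval_fresh.
Qed.

Lemma eval_swap x z y k t : maxY t <= k ->
  eval x (upd y k z) (onlyfirst k t) = eval z (upd y k x) (dropfirst k t).
Proof.
elim: t => //=.
- by move=> _; rewrite /upd eqxx.
- by move=> i lt; rewrite /upd ltn_eqF.
- by move=> s t IH h; rewrite IH.
- by move=> f t IH h; rewrite IH.
- move=> t1 IH1 t2 IH2; rewrite geq_max => /andP[h1 h2].
  case e: (cnt t1 == 0) => /=.
    by rewrite IH2 // (@eval_fresh x y k z t1 h1) (@eval_fresh z y k x t1 h1) (@cnt0_eval A t1 x z y (eqP e)).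
  by rewrite IH1 // (@eval_allY x y k z t2 h2) (@eval_fresh z y k x t2 h2).
Qed.

Lemma cnt_allY k t : cnt (allY k t) = 0.
Proof. by elim: t => //= t1 -> t2 ->. Qed.

Lemma cnt_only k t : 0 < cnt t -> cnt (onlyfirst k t) = 1.
Proof.
elim: t => //= t1 IH1 t2 IH2 h.
case e: (cnt t1 == 0) => /=.
  by move/eqP: e => e; rewrite e IH2 //; move: h; rewrite e.
rewrite cnt_allY addn0 IH1 //; by rewrite lt0n e.
Qed.

Lemma cnt_drop k t : cnt (dropfirst k t) = (cnt t).-1.
Proof.
elim: t => //= t1 IH1 t2 IH2.
case e: (cnt t1 == 0) => /=.
  by move/eqP: e => e; rewrite e IH2.
rewrite IH1; move/negbT: e; rewrite -lt0n => e; lia.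
Qed.

Lemma termG_allY k t : term_G t -> term_G (allY k t).
Proof. elim: t => //= [f t IH [h1 h2]|t1 IH1 t2 IH2 [h1 h2]]; split; auto. Qed.

Lemma termG_only k t : term_G t -> term_G (onlyfirst k t).
Proof.
elim: t => //= [f t IH [h1 h2]|t1 IH1 t2 IH2 [h1 h2]]; first by split; auto.
by case: (cnt t1 == 0) => /=; split; auto; apply: termG_allY.
Qed.

Lemma termG_drop k t : term_G t -> term_G (dropfirst k t).
Proof.
elim: t => //= [f t IH [h1 h2]|t1 IH1 t2 IH2 [h1 h2]]; first by split; auto.
by case: (cnt t1 == 0) => /=; split; auto.
Qed.

Lemma termGtau_G tau (t : term) : term_Gtau tau t -> term_G t.
Proof.
elim: t => //= [s t IH [_ h]|f t IH [[h1 _] h2]|t1 IH1 t2 IH2 [h1 h2]]; [exact: IH h|split; auto|split; auto].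
Qed.

Lemma gsort0_src G : gsort G = fset0 -> src G = [::].
Proof.
case: G => v e [|p s] //= h; have : p.1 \in gsort (Graph v e (p :: s)).
  by rewrite in_gsort /lab mem_head.
by rewrite h in_fset0.
Qed.

Lemma mem_map_can (a a' : nat -> nat) s l : cancel a a' -> cancel a' a ->
  (l \in map a s) = (a' l \in s).
Proof. by move=> c1 c2; rewrite -{1}(c2 l) mem_map //; apply: can_inj c1. Qed.

Lemma one_dir (L : graph -> Prop) (tau : {fset nat}) G1 G2 :
  (forall G, L G -> wf_graph G /\ gsort G = fset0) ->
  (forall G H, wf_graph G -> wf_graph H -> iso G H -> L G -> L H) ->
  wf_graph G1 -> wf_graph G2 -> gsort G1 = gsort G2 -> (gsort G1 `<=` tau)%fset ->
  (forall t, term_Gtau tau t -> forall y, (forall i, elem_Gtau tau (y i)) ->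
     L (eval G1 y t) -> L (eval G2 y t)) ->
  forall t, term_G t -> forall y, (forall i, wf_graph (y i)) -> L (eval G1 y t) -> L (eval G2 y t).
Proof.
move=> LH Liso w1 w2 se s1 HT.
have OH : forall t y, term_G t -> cnt t = 1 -> (forall i, wf_graph (y i)) ->
    L (eval G1 y t) -> L (eval G2 y t).
  move=> t y ht c wy L1.
  have [r [a [a' [C [c1 c2 wC h]]]]] := nf_onehole (gsort G1) ht c wy.
  have ai : injective a by apply: can_inj c1.
  have i1 := h G1 w1 erefl; have i2 := h G2 w2 (esym se).
  have wE1 := wf_eval ht w1 wy; have wE2 := wf_eval ht w2 wy.
  have wN : forall x, wf_graph x -> wf_graph (NF r a C x) by move=> x wx; apply: wf_NF.
  have LN1 : L (NF r a C G1) := Liso _ _ wE1 (wN _ w1) i1 L1.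
  have [_ sN1] := LH _ LN1.
  have src1 := gsort0_src sN1.
  have labN : forall x l, (l \in lab (NF r a C x)) = (l \in r) && ((a' l \in lab x) || (l \in lab C)).
    by move=> x l; rewrite /NF mem_lab_restrict mem_lab_par lab_rename (mem_map_can _ _ c1 c2).
  have src2 : src (NF r a C G2) = [::].
    case e: (src (NF r a C G2)) => [|p s] //.
    have : p.1 \in lab (NF r a C G2) by rewrite /lab e mem_head.
    by rewrite labN -in_gsort -se in_gsort -labN /lab src1.
  pose C2 := g_restrict (gsort G1) (g_rename a' C).
  have wC2 : wf_graph C2 by apply: wf_restrict; apply: wf_rename => //; apply: can_inj c2.
  have E : forall x, wf_graph x -> gsort x = gsort G1 -> src (NF r a C x) = [::] ->
      NF r a C x = eval x (fun _ => C2) (TRestrict fset0 (TPar (TX A) (TY A 0))).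
    move=> x wx sx sN; rewrite /NF restrict_empty // (@restrict0_rename A x C a a' c1 c2) restrict0_sub.
      by rewrite sx.
    by apply: wf_rename => //; apply: can_inj c2.
  have LN2 : L (NF r a C G2).
    rewrite (E G2 w2 (esym se) src2); apply: HT.
    - by split; [apply: fsub0set | split].
    - move=> i; split => //; apply/fsubsetP => l; rewrite in_gsort mem_lab_restrict.
      by case/andP => lG _; apply: (fsubsetP s1).
    by rewrite -E.
  exact: Liso _ _ (wN _ w2) wE2 (iso_sym wE2 (wN _ w2) i2) LN2.
move=> t ht y wy; move: {2}(cnt t) (erefl (cnt t)) => n.
elim: n t ht y wy => [|n IH] t ht y wy c L1.
  by rewrite -(cnt0_eval G1 G2 y c).
set k := maxY t.
have wyk : forall z, wf_graph z -> forall i, wf_graph (upd y k z i).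
  by move=> z wz i; rewrite /upd; case: (i == k).
have L2 : L (eval G1 (upd y k G1) (onlyfirst k t)).
  by rewrite eval_swap // eval_drop.
have c0 : 0 < cnt t by rewrite c.
have L3 := OH _ _ (termG_only k ht) (cnt_only k c0) (wyk _ w1) L2.
move: L3; rewrite eval_swap // => L3.
have cd : cnt (dropfirst k t) = n by rewrite cnt_drop c.
have := IH _ (termG_drop k ht) _ (wyk _ w2) cd L3.
by rewrite eval_drop.
Qed.

End Multi.

Theorem lemma7p3 (A : Type) (L : graph A -> Prop) (tau : {fset nat})
  (G1 G2 : graph A) :
  (forall G, L G -> wf_graph G /\ gsort G = fset0) ->
  (forall G H, wf_graph G -> wf_graph H -> iso G H -> L G -> L H) ->
  wf_graph G1 -> wf_graph G2 ->
  (gsort G1 `<=` tau)%fset -> (gsort G2 `<=` tau)%fset ->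
  (syn_cong (@term_G A) (@elem_G A) L G1 G2 <->
   syn_cong (term_Gtau tau) (elem_Gtau tau) L G1 G2).
Proof.
move=> LH Liso w1 w2 s1 s2; split.
- case=> se H; split => // t ht y hy; apply: H; first exact: termGtau_G ht.
  by move=> i; case: (hy i).
- case=> se HT; split => // t ht y hy; split.
  + apply: (one_dir LH Liso w1 w2 se s1) => // t' ht' y' hy'.
    by case: (HT t' ht' y' hy').
  + apply: (one_dir LH Liso w2 w1 (esym se) s2) => // t' ht' y' hy'.
    by case: (HT t' ht' y' hy').
Qed.
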